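(* Let $A$, $c$ be as in the context. If the system $yA\le c$ is totally dual integral, then $IP_{A,c}$ is a Gomory family.
   Context: $A\in\mathbb Z^{d\times n}$ has rank $d$, columns $a_1,\dots,a_n$, $cone(A)$ pointed, $\{x\in\mathbb R^n_{\ge0}:Ax=0\}=\{0\}$, $\mathbb ZA=\mathbb Z^d$, $\mathbb NA=\{Au:u\in\mathbb N^n\}$. For $c\in\mathbb Z^n$ and $b\in\mathbb NA$, $IP_{A,c}(b)=\min\{c\cdot x: Ax=b,\ x\in\mathbb N^n\}$; $IP_{A,c}$ is the family of these programs; for $b\in cone(A)$, $LP_{A,c}(b)=\min\{c\cdot x:Ax=b,\ x\ge0\}$. The system $yA\le c$ is totally dual integral if $LP_{A,c}(b)$ has an integral optimal solution for every $b\in cone(A)\cap\mathbb Z^d$. The regular triangulation $\Delta_c$ is the simplicial complex of all $\sigma\subseteq\{1,\dots,n\}$ for which some $y\in\mathbb R^d$ has $y\cdot a_j=c_j$ ($j\in\sigma$), $y\cdot a_j<c_j$ ($j\notin\sigma$). $c$ is generic: $\Delta_c$ is a triangulation and every $IP_{A,c}(b)$ has a unique optimal solution. For a maximal face $\sigma$ let $\tilde c_{\bar\sigma}=c_{\bar\sigma}-c_\sigma A_\sigma^{-1}A_{\bar\sigma}$; the (Gomory) group relaxation $G^\sigma(b)$ is $\min\{\tilde c_{\bar\sigma}\cdot x_{\bar\sigma}: A_\sigma x_\sigma+A_{\bar\sigma}x_{\bar\sigma}=b,\ x_{\bar\sigma}\ge0,\ x\in\mathbb Z^n\}$, and it solves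 $IP_{A,c}(b)$ if its optimal solution is non-negative. $IP_{A,c}$ is a Gomory family if for every $b\in\mathbb NA$ there is a maximal face $\sigma$ of $\Delta_c$ such that $G^\sigma(b)$ solves $IP_{A,c}(b)$. *)

(* Defs.v *)
From HB Require Import structures.
From mathcomp Require Import all_boot all_order all_algebra.
From mathcomp Require Import reals.
Set Implicit Arguments. Unset Strict Implicit. Unset Printing Implicit Defensive.
Import Order.TTheory GRing.Theory Num.Theory.
Local Open Scope ring_scope.

Section IPdefs.
Variables (R : realType) (d n : nat) (A : 'M[int]_(d, n)) (c : 'rV[int]_n).

Definition AR : 'M[R]_(d, n) := map_mx (fun z : int => z%:~R) A.
Definition cR : 'rV[R]_n := map_mx (fun z : int => z%:~R) c.

Definition nonnegR (x : 'cV[R]_n) := forall j, 0 <= x j 0.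
Definition nonnegZ (x : 'cV[int]_n) := forall j, 0 <= x j 0.

Definition in_cone (v : 'cV[R]_d) := exists x, nonnegR x /\ AR *m x = v.

Definition cone_pointed := forall v, in_cone v -> in_cone (- v) -> v = 0.

Definition kernel_condition :=
  forall x : 'cV[R]_n, nonnegR x -> AR *m x = 0 -> x = 0.

Definition lattice_full := forall b : 'cV[int]_d, exists z : 'cV[int]_n, A *m z = b.

Definition in_NA (b : 'cV[int]_d) := exists u : 'cV[int]_n, nonnegZ u /\ A *m u = b.

Definition IP_feas (b : 'cV[int]_d) (x : 'cV[int]_n) := nonnegZ x /\ A *m x = b.
Definition IP_opt (b : 'cV[int]_d) (x : 'cV[int]_n) :=
  IP_feas b x /\ forall x', IP_feas b x' -> (c *m x) 0 0 <= (c *m x') 0 0.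

Definition LP_feas (b : 'cV[R]_d) (x : 'cV[R]_n) := nonnegR x /\ AR *m x = b.
Definition LP_opt (b : 'cV[R]_d) (x : 'cV[R]_n) :=
  LP_feas b x /\ forall x', LP_feas b x' -> (cR *m x) 0 0 <= (cR *m x') 0 0.

(* yA <= c is totally dual integral: for every b in cone(A) ∩ Z^d,
   LP_{A,c}(b) has an integral optimal solution *)
Definition TDI :=
  forall b : 'cV[int]_d, in_cone (map_mx (fun z : int => z%:~R) b) ->
    exists z : 'cV[int]_n,
      LP_opt (map_mx (fun z : int => z%:~R) b) (map_mx (fun z : int => z%:~R) z).

(* sigma is a face of the regular triangulation Delta_c *)
Definition face (s : {set 'I_n}) :=
  exists y : 'rV[R]_d, forall j,
    if j \in s then (y *m AR) 0 j = cR 0 j else (y *m AR) 0 j < cR 0 j.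

Definition supported (s : {set 'I_n}) (x : 'cV[R]_n) := forall j, j \notin s -> x j 0 = 0.

Definition lin_indep_cols (s : {set 'I_n}) :=
  forall x : 'cV[R]_n, supported s x -> AR *m x = 0 -> x = 0.

(* Delta_c is a triangulation of cone(A): every cell is simplicial and
   the cells cover cone(A) *)
Definition is_triangulation :=
  (forall s, face s -> lin_indep_cols s) /\
  (forall v, in_cone v -> exists s, face s /\
      exists x, nonnegR x /\ supported s x /\ AR *m x = v).

Definition generic :=
  is_triangulation /\ forall b, in_NA b -> exists! x, IP_opt b x.

Definition maximal_face (s : {set 'I_n}) :=
  face s /\ forall t, face t -> s \subset t -> t = s.

Definition proj_on (s : {set 'I_n}) : 'M[R]_n := diag_mx (\row_j (j \in s)%:R).

(* A_s and c_s (columns outside s zeroed out), and c_s A_s^{-1} *)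
Definition A_sig s := AR *m proj_on s.
Definition c_sig s := cR *m proj_on s.
Definition y_sig s : 'rV[R]_d := c_sig s *m pinvmx (A_sig s).

Definition ctilde s : 'rV[R]_n := cR - y_sig s *m AR.

Definition G_feas (s : {set 'I_n}) (b : 'cV[int]_d) (x : 'cV[int]_n) :=
  A *m x = b /\ forall j, j \notin s -> 0 <= x j 0.
Definition G_obj (s : {set 'I_n}) (x : 'cV[int]_n) : R :=
  \sum_(j | j \notin s) ctilde s 0 j * (x j 0)%:~R.
Definition G_opt s b x :=
  G_feas s b x /\ forall x', G_feas s b x' -> G_obj s x <= G_obj s x'.

Definition G_solves s b :=
  (exists x, G_opt s b x) /\ forall x, G_opt s b x -> nonnegZ x.

Definition gomory_family :=
  forall b, in_NA b -> exists s, maximal_face s /\ G_solves s b.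

End IPdefs.

(* Main.v *)
Require Import Defs.
From HB Require Import structures.
From mathcomp Require Import all_boot all_order all_algebra.
From mathcomp Require Import reals.
From Stdlib Require Import Classical.
From mathcomp Require Import zify ring lra.
Import Order.TTheory GRing.Theory Num.Theory.
Local Open Scope ring_scope.

Section Proof.
Variables (R : realType) (d n : nat) (A : 'M[int]_(d, n)) (c : 'rV[int]_n).

Lemma slackE (y : 'rV[R]_d) (x : 'cV[R]_n) :
  (cR R c *m x) 0 0 = (y *m (AR R A *m x)) 0 0 +
     \sum_j (cR R c 0 j - (y *m AR R A) 0 j) * x j 0.
Proof.
have -> : cR R c = y *m AR R A + (cR R c - y *m AR R A) by rewrite addrC subrK.
rewrite mulmxDl mulmxA mxE [X in _ + X]mxE; congr (_ + _).
by apply: eq_bigr => j _; rewrite !mxE; congr (_ * _); rewrite addrAC subrr add0r.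
Qed.

Lemma face_le (s : {set 'I_n}) (y : 'rV[R]_d) : (forall j, if j \in s then (y *m AR R A) 0 j = cR R c 0 j
                                else (y *m AR R A) 0 j < cR R c 0 j) ->
  forall j, (y *m AR R A) 0 j <= cR R c 0 j.
Proof. by move=> H j; have := H j; case: (j \in s) => [->|/ltW]. Qed.

Lemma exists_max (s : {set 'I_n}) : face R A c s -> exists t, maximal_face R A c t /\ s \subset t.
Proof.
move=> fs; move: s fs.
suff: forall k (s : {set 'I_n}), (n - #|s| <= k)%N -> face R A c s ->
   exists t, maximal_face R A c t /\ s \subset t by move=> H s fs; apply: (H n s (leq_subr _ _) fs).
elim=> [|k IH] {}s hk fs0.
- exists s; split => //; split => // t ft st.
  apply/eqP; rewrite eq_sym eqEcard st /=.
  have : (#|t| <= n)%N by have := max_card t; rewrite card_ord.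
  move: hk => h1 h2; apply: (leq_trans h2); by rewrite -subn_eq0 -leqn0.
- case: (classic (forall t, face R A c t -> s \subset t -> t = s)) => [H|H].
    by exists s; split => //; split.
  have [t Ht] := not_all_ex_not _ _ H.
  have ft : face R A c t by apply: NNPP => HH; apply: Ht => /HH.
  have st : s \subset t by apply: NNPP => HH; apply: Ht => _ /HH.
  have tne : t <> s by move=> e; apply: Ht => _ _; exact e.
  have lt : (#|s| < #|t|)%N.
    rewrite ltnNge; apply/negP => h; apply: tne; apply/eqP.
    by rewrite eq_sym eqEcard st.
  have ct : (#|t| <= n)%N by have := max_card t; rewrite card_ord.
  have hk' : (n - #|t| <= k)%N.
    move: hk lt ct; move: #|t| #|s| => a b; lia.
  have [u [mu tu]] := IH t hk' ft.
  exists u; split => //; exact: subset_trans st tu.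
Qed.

Lemma Asig_entry (s : {set 'I_n}) (w : 'rV[R]_d) j :
  (w *m A_sig R A s) 0 j = (w *m AR R A) 0 j * (j \in s)%:R.
Proof. by rewrite /A_sig /proj_on mulmxA mul_mx_diag !mxE. Qed.

Lemma grow (s : {set 'I_n}) (y1 : 'rV[R]_d) :
  (forall j, if j \in s then (y1 *m AR R A) 0 j = cR R c 0 j
             else (y1 *m AR R A) 0 j < cR R c 0 j) ->
  (forall t, face R A c t -> s \subset t -> t = s) ->
  forall w : 'rV[R]_d, w *m A_sig R A s = 0 ->
  forall j0, 0 < (w *m AR R A) 0 j0 -> False.
Proof.
move=> Hy1 Hmax w hw j0 hj0.
set a := w *m AR R A.
have a0 : forall j, j \in s -> a 0 j = 0.
  move=> j js; have := Asig_entry s w j; rewrite hw js mxE mulr1 => <-.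
  by [].
pose f j := (cR R c 0 j - (y1 *m AR R A) 0 j) / a 0 j.
have [jm Pjm Hmin] := arg_minP (P := fun j => 0 < a 0 j) f hj0.
have jmns : jm \notin s.
  by apply/negP => js; move: Pjm; rewrite a0 // ltxx.
have ltjm : (y1 *m AR R A) 0 jm < cR R c 0 jm.
  by have := Hy1 jm; rewrite (negbTE jmns).
set t := f jm.
have tgt0 : 0 < t by rewrite /t /f divr_gt0 // subr_gt0.
set y' := y1 + t *: w.
have y'E : forall j, (y' *m AR R A) 0 j = (y1 *m AR R A) 0 j + t * a 0 j.
  by move=> j; rewrite /y' mulmxDl -scalemxAl !mxE.
have le' : forall j, (y' *m AR R A) 0 j <= cR R c 0 j.
  move=> j; rewrite y'E; case: (ltrP 0 (a 0 j)) => h.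
  - have h1 : t * a 0 j <= cR R c 0 j - (y1 *m AR R A) 0 j.
      have := Hmin j h; rewrite -/t -(ler_pM2r h) /f divfK ?gt_eqF //.
    lra.
  - have h1 : t * a 0 j <= 0 by rewrite mulr_ge0_le0 // ltW.
    have := face_le _ _ Hy1 j; lra.
pose tau := [set j | (y' *m AR R A) 0 j == cR R c 0 j].
have ftau : face R A c tau.
  exists y' => j; rewrite inE; case: eqP => // hne.
  by rewrite lt_neqAle le' andbT; apply/eqP.
have stau : s \subset tau.
  apply/subsetP => j js; rewrite inE y'E a0 // mulr0 addr0.
  by have := Hy1 j; rewrite js => ->.
have jmtau : jm \in tau.
  have ane : a 0 jm != 0 by rewrite gt_eqF.
  rewrite inE y'E /t /f divfK //. apply/eqP. lra.
have := Hmax tau ftau stau => e.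
by move: jmtau; rewrite e (negbTE jmns).
Qed.

Lemma max_free (s : {set 'I_n}) : \rank (AR R A) = d -> maximal_face R A c s ->
  forall w : 'rV[R]_d, w *m A_sig R A s = 0 -> w = 0.
Proof.
move=> rk [[y1 Hy1] Hmax] w hw.
apply: NNPP => wn0.
have wA : w *m AR R A != 0.
  by rewrite mulmx_free_eq0 /row_free ?rk //; apply/eqP.
have [j0 hj0] : exists j, (w *m AR R A) 0 j != 0.
  apply: NNPP => H; move/eqP: wA; apply; apply/matrixP => i j.
  rewrite (ord1 i); apply/eqP; rewrite [X in _ == X]mxE; apply: contraT => hj; exfalso; apply: H; exists j; exact: hj.
case: (ltrP 0 ((w *m AR R A) 0 j0)) => h.
  exact: (grow _ _ Hy1 Hmax _ hw _ h).
apply: (grow _ _ Hy1 Hmax (- w) _ j0).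
  by rewrite mulNmx hw oppr0.
rewrite mulNmx mxE oppr_gt0 lt_neqAle hj0 h //.
Qed.

Lemma ysigE (s : {set 'I_n}) (y1 : 'rV[R]_d) : \rank (AR R A) = d -> maximal_face R A c s ->
  (forall j, if j \in s then (y1 *m AR R A) 0 j = cR R c 0 j
             else (y1 *m AR R A) 0 j < cR R c 0 j) ->
  y_sig R A c s = y1.
Proof.
move=> rk ms Hy1.
have cE : c_sig R c s = y1 *m A_sig R A s.
  apply/matrixP => i j; rewrite (ord1 i) Asig_entry /c_sig /proj_on mul_mx_diag !mxE.
  by have := Hy1 j; rewrite !mxE; case: (j \in s) => [->|_]; rewrite ?mulr0.
have h : y_sig R A c s *m A_sig R A s = c_sig R c s.
  by rewrite /y_sig mulmxKpV // cE submxMl.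
apply/eqP; rewrite -subr_eq0; apply/eqP; apply: (max_free _ rk ms).
by rewrite mulmxBl h cE subrr.
Qed.

Lemma mapZ_inj m p (X Y : 'M[int]_(m, p)) :
  map_mx (fun z : int => z%:~R : R) X = map_mx (fun z : int => z%:~R : R) Y -> X = Y.
Proof.
move=> e; apply/matrixP => i j; move/matrixP/(_ i j): e; rewrite !mxE; exact: intr_inj.
Qed.

Lemma mapM (x : 'cV[int]_n) :
  map_mx (fun z : int => z%:~R : R) (A *m x) = AR R A *m map_mx (fun z : int => z%:~R : R) x.
Proof. by rewrite map_mxM. Qed.

Lemma subE (M N : 'rV[R]_n) j : (M - N) 0 j = M 0 j - N 0 j.
Proof. by rewrite !mxE. Qed.
End Proof.
Arguments subE {R n}.
Arguments mapM {R d n A} x.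
Arguments mapZ_inj {R m p X Y}.
Arguments slackE {R d n A c} y x.
Arguments face_le {R d n A c s y}.
Arguments exists_max {R d n A c s}.
Arguments ysigE {R d n A c s y1}.


Theorem corollary3p4 (R : realType) (d n : nat) (A : 'M[int]_(d, n)) (c : 'rV[int]_n) :
  \rank (AR R A) = d ->
  cone_pointed R A ->
  kernel_condition R A ->
  lattice_full A ->
  generic R A c ->
  TDI R A c ->
  gomory_family R A c.
Proof.
move=> rk _ _ _ [[lin cover] _] tdi b [u [u0 Au]].
set bR := map_mx (fun z : int => z%:~R : R) b.
have cone : @in_cone R d n A bR.
  exists (map_mx (fun z : int => z%:~R : R) u); split.
    by move=> j; rewrite mxE ler0z; exact: u0.
  by rewrite -mapM Au.
have [s [[y Hy] [x [x0 [xs Ax]]]]] := cover _ cone.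
have [z [[z0 Az] zopt]] := tdi b cone.
set zR := map_mx (fun z : int => z%:~R : R) z in z0 Az zopt.
have cz_le := zopt x (conj x0 Ax).
rewrite (slackE (A:=A) y) Az (slackE (A:=A) y x) Ax in cz_le.
have sx0 : \sum_j (cR R c 0 j - (y *m AR R A) 0 j) * x j 0 = 0.
  apply: big1 => j _; have := Hy j; case: ifP => js.
    by move=> ->; rewrite subrr mul0r.
  by move=> _; rewrite xs ?js // mulr0.
rewrite sx0 addr0 gerDl in cz_le.
have termge0 : forall j, 0 <= (cR R c 0 j - (y *m AR R A) 0 j) * zR j 0.
  by move=> j; rewrite mulr_ge0 // subr_ge0 (face_le Hy).
have sz0 : \sum_j (cR R c 0 j - (y *m AR R A) 0 j) * zR j 0 = 0.
  by apply/eqP; rewrite eq_le cz_le sumr_ge0.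
have zs : forall j, j \notin s -> zR j 0 = 0.
  move=> j js; have := psumr_eq0P (fun j _ => termge0 j) sz0 (i := j) isT.
  move/eqP; rewrite mulf_eq0 => /orP [|/eqP //].
  have := Hy j; rewrite (negbTE js) => h; by rewrite subr_eq0 (gt_eqF h).
have [sig [ms ssig]] := exists_max (ex_intro _ y Hy).
have ms' := ms; case: ms' => [[y1 Hy1] _].
have ysig := ysigE rk ms Hy1.
have ctpos : forall j, j \notin sig -> 0 < ctilde R A c sig 0 j.
  move=> j jn; rewrite /ctilde ysig.
  rewrite subE subr_gt0.
  by have := Hy1 j; rewrite (negbTE jn).
have zint0 : nonnegZ z.
  by move=> j; have := z0 j; rewrite mxE ler0z.
have Azb : A *m z = b by apply: (mapZ_inj (R:=R)); rewrite mapM; exact: Az.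
have zsig : forall j, j \notin sig -> z j 0 = 0.
  move=> j jn; apply/eqP; rewrite -(intr_eq0 R); apply/eqP.
  have := zs j; rewrite mxE; apply; apply: contra jn; exact: (subsetP ssig).
have Gz0 : G_obj R A c sig z = 0.
  by apply: big1 => j jn; rewrite zsig // mulr0.
have Gge0 : forall x', G_feas A sig b x' -> 0 <= G_obj R A c sig x'.
  move=> x' [_ hx']; apply: sumr_ge0 => j jn.
  by rewrite mulr_ge0 ?ler0z ?hx' // ltW // ctpos.
have zfeas : G_feas A sig b z by split => // j _; exact: zint0.
exists sig; split => //; split.
  exists z; split => // x' hx'; rewrite Gz0; exact: Gge0.
move=> x' [[Ax' x'0] xopt].
have Gx0 : G_obj R A c sig x' = 0.
  have h1 := xopt z zfeas; rewrite Gz0 in h1.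
  by apply/eqP; rewrite eq_le h1 Gge0 //; split.
have xsig : forall j, j \notin sig -> x' j 0 = 0.
  move=> j jn.
  have nn : forall i, i \notin sig -> 0 <= ctilde R A c sig 0 i * (x' i 0)%:~R.
    by move=> i iin; rewrite mulr_ge0 ?ler0z ?x'0 // ltW // ctpos.
  have := psumr_eq0P nn Gx0 jn.
  by move/eqP; rewrite mulf_eq0 (gt_eqF (ctpos j jn)) intr_eq0 /= => /eqP.
have ex : x' = z.
  apply: (mapZ_inj (R:=R)); apply/eqP; rewrite -subr_eq0; apply/eqP.
  apply: (lin _ (ms.1)).
    move=> j jn; rewrite !mxE xsig // zsig // subrr //.
  by rewrite mulmxBr -!mapM Ax' Azb subrr.
by rewrite ex.
Qed.
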